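(* The continuous density $f$ of the limiting Quicksort random variable $Y$ satisfies $f(x)>0$ for every $x\in\mathbb{R}$.
   Context: Let $g(u):=2u\ln u+2(1-u)\ln(1-u)+1$ for $u\in(0,1)$. The limiting Quicksort random variable $Y$ is the limit in distribution of $(X_n-\mathbf{E}X_n)/n$, where $X_n$ is the number of comparisons used by randomized Quicksort on $n$ distinct numbers; equivalently, its law is the unique law with $\mathbf{E}Y=0$ and finite variance satisfying $Y\overset{d}{=}UY+(1-U)Z+g(U)$, where on the right $U,Y,Z$ are independent, $Z\overset{d}{=}Y$ and $U$ is uniform on $(0,1)$. $Y$ has a continuous (indeed infinitely differentiable) density $f$. *)

(* Defs.v *)
From HB Require Import structures.
From mathcomp Require Import all_boot all_order all_algebra.
From mathcomp Require Import all_classical all_reals all_analysis.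
Set Implicit Arguments. Unset Strict Implicit. Unset Printing Implicit Defensive.
Import Order.TTheory GRing.Theory Num.Theory.
Import numFieldNormedType.Exports.
Local Open Scope classical_set_scope.
Local Open Scope ring_scope.

Definition quick_g (R : realType) (u : R) : R :=
  2 * u * ln u + 2 * (1 - u) * ln (1 - u) + 1.

(* The law mu of Y (a probability on the Borel sets of R) is the
   limiting Quicksort law: E Y = 0, Var Y < oo, and
   Y =d U Y + (1-U) Z + g(U) with U ~ Unif(0,1), Y, Z ~ mu, all independent,
   i.e. for every Borel set A,
   mu A = P(U Y + (1-U) Z + g U \in A)
        = int_0^1 int int 1_A(u y + (1-u) z + g u) dmu(z) dmu(y) du. *)
Definition quicksort_law (R : realType) (mu : probability R R) : Prop :=
  mu.-integrable setT (fun x : R => (x ^+ 2)%:E) /\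
  (\int[mu]_x (x%:E) = 0)%E /\
  forall A : set R, measurable A ->
    mu A =
    (\int[@lebesgue_measure R]_(u in `]0%R, 1%R[%classic)
       \int[mu]_y \int[mu]_z
          (\1_A (u * y + (1 - u) * z + quick_g u) : R)%:E)%E.

Definition is_density (R : realType) (mu : probability R R) (f : R -> R) : Prop :=
  forall A : set R, measurable A ->
    mu A = (\int[@lebesgue_measure R]_(x in A) (f x)%:E)%E.

(* Main.v *)
Require Import Defs.
From HB Require Import structures.
From mathcomp Require Import all_boot all_order all_algebra.
From mathcomp Require Import all_classical all_reals all_analysis.
From mathcomp Require Import ring lra.
Import Order.TTheory GRing.Theory Num.Theory.
Import numFieldNormedType.Exports.
Local Open Scope ring_scope.
Local Open Scope classical_set_scope.

Lemma le_int_nm d (T : measurableType d) (R : realType) (mu : measure T R)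
  (D : set T) (f1 f2 : T -> \bar R) :
  (forall x, D x -> (0 <= f1 x)%E) -> (forall x, D x -> (f1 x <= f2 x)%E) ->
  (\int[mu]_(x in D) f1 x <= \int[mu]_(x in D) f2 x)%E.
Proof.
move=> f10 f12.
have f20 x : D x -> (0 <= f2 x)%E by move=> Dx; exact: le_trans (f10 _ Dx) (f12 _ Dx).
rewrite (ge0_integralE _ f10) (ge0_integralE _ f20) /=.
apply: ereal_sup_le => _ [h hf <-]; exists h => // x.
apply: le_trans (hf x) _; rewrite /patch; case: ifP => // /set_mem Dx; exact: f12.
Qed.

Section Dens.
Variables (R : realType) (mu : probability R R) (f : R -> R).
Hypothesis fc : continuous f.
Hypothesis fd : is_density mu f.

Lemma dens_lb (a b eta : R) : a < b -> 0 <= eta ->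
  (forall x, a < x < b -> eta <= f x) ->
  ((eta * (b - a))%:E <= mu `]a, b[%classic)%E.
Proof.
move=> ab e0 H; rewrite fd; last exact: measurable_itv.
apply: le_trans; last first.
  apply: (@le_int_nm _ _ _ _ _ (cst eta%:E)).
    by move=> x _; rewrite lee_fin.
  by move=> x /=; rewrite in_itv /= => /H; rewrite lee_fin.
rewrite integral_cst; last exact: measurable_itv.
have := lebesgue_measure_itv `]a, b[%R; rewrite /= lte_fin ab => E.
by rewrite [X in (_ <= _ * X)%E]E EFinM EFinB EFinN.
Qed.

Lemma dens_ub (a b M : R) : a < b -> (forall x, a < x < b -> 0 <= f x <= M) ->
  (mu `]a, b[%classic <= (M * (b - a))%:E)%E.
Proof.
move=> ab H; rewrite fd; last exact: measurable_itv.
apply: le_trans.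
  apply: (@le_int_nm _ _ _ _ _ _ (cst M%:E)).
    by move=> x /=; rewrite in_itv /= => /H /andP[]; rewrite lee_fin.
  by move=> x /=; rewrite in_itv /= => /H /andP[_]; rewrite lee_fin.
rewrite integral_cst; last exact: measurable_itv.
have := lebesgue_measure_itv `]a, b[%R; rewrite /= lte_fin ab => E.
by rewrite [X in (_ * X <= _)%E]E EFinM EFinB EFinN.
Qed.

End Dens.

Lemma cont_ball (R : realType) (f : R -> R) (x e : R) : {for x, continuous f} -> 0 < e ->
  exists2 r, 0 < r & forall y, `|x - y| < r -> `|f x - f y| < e.
Proof.
move=> fc e0; have /cvgrPdist_lt /(_ e e0) := fc.
move=> /nbhs_ballP [r /= r0 H]; exists r => // y xy; apply: H.
Qed.

Section Dens2.
Variables (R : realType) (mu : probability R R) (f : R -> R).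
Hypothesis fc : continuous f.
Hypothesis fd : is_density mu f.

Lemma f_ge0 x0 : 0 <= f x0.
Proof.
rewrite leNgt; apply/negP => fx0.
have e0 : 0 < - f x0 / 2 by lra.
have [r r0 Hr] := @cont_ball _ _ x0 _ (fc x0) e0.
have Hy y : x0 - r < y < x0 + r -> f y < f x0 / 2.
  rewrite -ltr_distlC => /Hr; rewrite ltr_norml => /andP[h _]; lra.
have : (0 <= mu `](x0 - r)%R, (x0 + r)%R[%classic)%E by apply: measure_ge0.
rewrite fd; last exact: measurable_itv.
rewrite integralE.
set I := `]x0 - r, x0 + r[%classic.
have mI : measurable I by exact: measurable_itv.
have -> : (\int[lebesgue_measure]_(x in I)
    ((fun x => (f x)%:E)^\+ x) = 0)%E.
  apply: integral0_eq => y; rewrite /I /= in_itv /= => /Hy fy.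
  rewrite funeposE; apply/max_idPr; rewrite lee_fin; lra.
have : ((- f x0 / 2 * ((x0 + r) - (x0 - r)))%:E <=
   \int[lebesgue_measure]_(x in I)
    ((fun x => (f x)%:E)^\- x))%E.
  apply: le_trans; last first.
    apply: (@le_int_nm _ _ _ _ _ (cst (- f x0 / 2)%:E)).
      by move=> x _; rewrite lee_fin; lra.
    move=> y; rewrite /I /= in_itv /= => /Hy fy.
    rewrite funenegE le_max; apply/orP; left; rewrite lee_fin; lra.
  rewrite integral_cst //.
  have := lebesgue_measure_itv `]x0 - r, x0 + r[%R.
  rewrite /= lte_fin (_ : x0 - r < x0 + r); last lra.
  by move=> E; rewrite [X in (_ <= _ * X)%E]E EFinM EFinB EFinN.
move: (\int[_]_(_ in _) _)%E => J.
rewrite sub0e oppe_ge0 => HJ J0.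
have : ((- f x0 / 2 * ((x0 + r) - (x0 - r)))%:E <= 0)%E by exact: le_trans HJ J0.
rewrite lee_fin => h.
have : 0 < - f x0 / 2 * ((x0 + r) - (x0 - r)) by apply: mulr_gt0; lra.
lra.
Qed.

End Dens2.

Lemma g_cont (R : realType) (u : R) : 0 < u < 1 -> {for u, continuous (@quick_g R)}.
Proof.
move=> /andP[u0 u1].
rewrite /quick_g.
apply: cvgD; last exact: cvg_cst.
apply: cvgD.
  apply: cvgM; first by apply: cvgM; [exact: cvg_cst|exact: cvg_id].
  exact: continuous_ln.
apply: cvgM; first by apply: cvgM; [exact: cvg_cst|apply: cvgB; [exact: cvg_cst|exact: cvg_id]].
have h1 : {for u, continuous (fun v : R => 1 - v)}.
  by apply: cvgB; [exact: cvg_cst|exact: cvg_id].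
have h2 : {for (1 - u), continuous (@ln R)}.
  by apply: continuous_ln; rewrite subr_gt0.
exact: (continuous_comp h1 h2).
Qed.

Lemma g_half_neg (R : realType) : @quick_g R (1/2) < 0.
Proof.
rewrite /quick_g.
have -> : (1 - 1/2 : R) = 1/2 by lra.
have e : (1/2 : R) = (1 + (-1/4)) * (1 + (-1/3)) by lra.
have h : ln (1/2 : R) <= -1/4 + -1/3.
  rewrite e lnM; last by rewrite posrE; lra.
    by apply: lerD; apply: le_ln1Dx; lra.
  by rewrite posrE; lra.
lra.
Qed.

Lemma g_16_pos (R : realType) : 0 < @quick_g R (1/16).
Proof.
rewrite /quick_g.
have h2 : ln (2 : R) <= 1 by have := @le_ln1Dx R 1 ltac:(lra); rewrite (_ : 1 + 1 = 2 :> R) //; lra.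
have e1 : (1/16 : R) = (2 ^+ 4)^-1 by rewrite -exprVn; lra.
have h16 : ln (1/16 : R) = - (4 * ln 2).
  by rewrite e1 lnV ?posrE ?exprn_gt0 // lnXn // mulr_natl.
have e2 : (1 - 1/16 : R) = (1 + 1/15)^-1 by field.
have h15 : ln (1 - 1/16 : R) >= - (1/15).
  rewrite e2 lnV ?posrE; last lra.
  by rewrite lerN2; apply: le_ln1Dx; lra.
lra.
Qed.

Lemma mem_oitv (R : realType) (a b w : R) : (w \in `]a, b[%classic) = (a < w < b).
Proof. by apply/idP/idP; rewrite in_setE /= in_itv. Qed.

Lemma indic_ge0' (R : realType) (A : set R) (x : R) : 0 <= \1_A x :> R.
Proof. by rewrite indicE ler0n. Qed.

Section Main.
Variables (R : realType) (mu : probability R R) (f : R -> R).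
Hypothesis fc : continuous f.
Hypothesis fd : is_density mu f.

Lemma G_bound (a r eta x eps u y v : R) : 0 <= eta ->
  (forall z, `|a - z| < r -> eta < f z) -> 0 < eps -> 0 < u < 1 ->
  x + eps - u * y - v <= (a + r) * (1 - u) ->
  (a - r) * (1 - u) <= x - eps - u * y - v ->
  (((2 * eta * eps)%:E) <= \int[mu]_z
     (\1_(`]x - eps, x + eps[%classic) (u * y + (1 - u) * z + v) : R)%:E)%E.
Proof.
move=> eta0 Hf eps0 /andP[u0 u1] hhi hlo.
have s0 : 0 < 1 - u by lra.
have [lo elo] : exists lo, lo = (x - eps - u * y - v) / (1 - u) by eexists.
have [hi ehi] : exists hi, hi = (x + eps - u * y - v) / (1 - u) by eexists.
have eqind (z : R) : \1_(`]x - eps, x + eps[%classic) (u * y + (1 - u) * z + v) =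
    \1_(`]lo, hi[%classic) z :> R.
  rewrite !indicE !mem_oitv elo ehi ltr_pdivrMr // ltr_pdivlMr //.
  have E : (x - eps < u * y + (1 - u) * z + v < x + eps) =
      (x - eps - u * y - v < z * (1 - u) < x + eps - u * y - v).
    by apply/andP/andP => -[h1 h2]; split; lra.
  by rewrite E.
under eq_integral do rewrite eqind.
rewrite integral_indic; [|exact: measurableT|exact: measurable_itv].
rewrite setIT.
have hilo : hi - lo = 2 * eps / (1 - u) by rewrite ehi elo; field; lra.
have H1 : lo < hi.
  rewrite -subr_gt0 hilo; apply: divr_gt0 => //; lra.
have H2 : forall z, lo < z < hi -> eta <= f z.
  move=> z /andP[h1 h2]; apply: ltW; apply: Hf.
    move: h1 h2; rewrite elo ehi ltr_pdivrMr // ltr_pdivlMr // => h1 h2.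
    rewrite ltr_distlC; apply/andP; split.
    + rewrite -(ltr_pM2r s0); lra.
    + rewrite -(ltr_pM2r s0); lra.
have L := @dens_lb R mu f fd lo hi eta H1 eta0 H2.
apply: le_trans L.
rewrite lee_fin hilo.
have h : 2 * eps <= 2 * eps / (1 - u) by rewrite ler_pdivlMr //; nra.
have := ler_wpM2l eta0 h; lra.
Qed.

End Main.

Lemma int_lb_indic d (T : measurableType d) (R : realType) (nu : measure T R)
  (D B : set T) (h : T -> \bar R) (k c : R) :
  measurable D -> measurable B -> 0 <= k -> (c%:E <= nu (B `&` D))%E ->
  (forall y, D y -> (0 <= h y)%E) -> (forall y, D y -> B y -> (k%:E <= h y)%E) ->
  ((k * c)%:E <= \int[nu]_(y in D) h y)%E.
Proof.
move=> mD mB k0 cB h0 hk.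
apply: le_trans; last first.
  apply: (@le_int_nm _ _ _ _ _ (fun y => (k * \1_B y)%:E)).
    by move=> y _; rewrite lee_fin mulr_ge0 // indicE ler0n.
  move=> y Dy; rewrite indicE; case: (boolP (y \in B)) => yB.
    by rewrite mulr1; apply: hk => //; rewrite -in_setE.
  by rewrite mulr0; exact: h0.
rewrite (@integralZl_indic _ _ _ _ _ mD (fun _ => B)) //; last first.
  by move=> /(le_lt_trans k0); rewrite ltxx.
rewrite integral_indic // EFinM; exact: lee_wpmul2l.
Qed.

Section Main2.
Variables (R : realType) (mu : probability R R) (f : R -> R).
Hypothesis fc : continuous f.
Hypothesis fd : is_density mu f.
Hypothesis hq : quicksort_law mu.

Lemma shift_pos a u0 : 0 < f a -> 0 < u0 < 1 -> 0 < f (a + quick_g u0).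
Proof.
move=> fa /andP[u00 u01].
have [m em] : exists m, m = 1 - u0 by eexists.
have m0 : 0 < m by lra.
have m1 : m < 1 by lra.
have [eta eeta] : exists eta, eta = f a / 2 by eexists.
have eta0 : 0 < eta by lra.
have [r r0 Hr] := @cont_ball _ _ a _ (fc a) eta0.
have Hf z : `|a - z| < r -> eta < f z.
  move=> /Hr; rewrite ltr_norml => /andP[h1 h2]; lra.
have mr0 : 0 < m * r by apply: mulr_gt0.
have e1 : 0 < m * r / 8 by lra.
have gc : {for u0, continuous (@quick_g R)} by apply: g_cont; rewrite u00 u01.
have [rho1 rho10 Hg] := @cont_ball _ _ u0 _ gc e1.
have [rho erho] : exists rho, rho = Num.min rho1 (Num.min (m / 2) u0) by eexists.
have rho0 : 0 < rho.
  have h : 0 < m / 2 by lra.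
  by rewrite erho !lt_min rho10 h u00.
have rho1' : rho <= rho1 by rewrite erho ge_min lexx.
have rho2 : rho <= m / 2 by rewrite erho !ge_min lexx !orbT.
have rho3 : rho <= u0 by rewrite erho !ge_min lexx !orbT.
have [delta edelta] : exists delta, delta = m * r / 8 by eexists.
have dr : delta < r.
  have : m * r < 1 * r by rewrite ltr_pM2r.
  lra.
have Y0lb := @dens_lb R mu f fd (a - delta) (a + delta) eta.
have Y0lb' : ((eta * (a + delta - (a - delta)))%:E <= mu `](a - delta)%R, (a + delta)%R[%classic)%E.
  apply: Y0lb; [lra | exact: ltW |].
  move=> y /andP[h1 h2]; apply/ltW/Hf; rewrite ltr_distlC; apply/andP; split; lra.
have c0 : 0 < eta * (a + delta - (a - delta)) by apply: mulr_gt0; lra.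
have [x ex] : exists x, x = a + quick_g u0 by eexists.
rewrite -ex ltNge; apply/negP => fx0.
have [K eK] : exists K,
  K = 2 * rho * ((eta * (a + delta - (a - delta))) * (2 * eta)) by eexists.
have K0 : 0 < K.
  rewrite eK; apply: mulr_gt0; first lra.
  by apply: mulr_gt0 => //; lra.
have K4 : 0 < K / 4 by lra.
have [eps0 eps00 Hx] := @cont_ball _ _ x _ (fc x) K4.
have Hfx z : `|x - z| < eps0 -> f z < K / 4.
  move=> /Hx; rewrite ltr_norml => /andP[h1 h2]; lra.
have [eps eeps] : exists eps, eps = Num.min eps0 (m * r / 4) by eexists.
have eps_pos : 0 < eps.
  have h : 0 < m * r / 4 by lra.
  by rewrite eeps lt_min eps00 h.
have epsA : eps <= eps0 by rewrite eeps ge_min lexx.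
have epsB : eps <= m * r / 4 by rewrite eeps ge_min lexx orbT.
have ub : (mu `](x - eps)%R, (x + eps)%R[%classic <= (K / 4 * (x + eps - (x - eps)))%:E)%E.
  apply: (@dens_ub R mu f fd); first lra.
  move=> z /andP[h1 h2]; rewrite (@f_ge0 R mu f fc fd) /=; apply/ltW/Hfx.
  rewrite ltr_distlC; apply/andP; split; lra.
have lb : ((K * eps)%:E <= mu `](x - eps)%R, (x + eps)%R[%classic)%E.
  case: hq => _ [_ hq'].
  rewrite hq'; last exact: measurable_itv.
  have -> : K * eps = ((2 * eta * eps) * (eta * (a + delta - (a - delta)))) *
      ((u0 + rho) - (u0 - rho)) by rewrite eK; ring.
  apply: (@int_lb_indic _ _ _ (@lebesgue_measure R) `]0%R, 1%R[%classic `](u0 - rho)%R, (u0 + rho)%R[%classic).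
  - exact: measurable_itv.
  - exact: measurable_itv.
  - apply: mulr_ge0; last exact: (ltW c0).
    apply: mulr_ge0; [lra | exact: (ltW eps_pos)].
  - have -> : `](u0 - rho)%R, (u0 + rho)%R[ `&` `]0%R, 1%R[ =
        `](u0 - rho)%R, (u0 + rho)%R[ :> set R.
      apply/seteqP; split => w /=; first by case.
      move=> hw; split => //; move: hw; rewrite !in_itv /= => /andP[h1 h2].
      apply/andP; split; lra.
    have := lebesgue_measure_itv `]u0 - rho, u0 + rho[%R.
    rewrite /= lte_fin (_ : u0 - rho < u0 + rho); last lra.
    by move=> E; rewrite [X in (_ <= X)%E]E EFinB EFinN.
  - move=> u _; apply: integral_ge0 => y _; apply: integral_ge0 => z _.
    by rewrite lee_fin indicE ler0n.
  move=> u /=; rewrite !in_itv /= => /andP[u0' u1'] /andP[hu1 hu2].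
  apply: (@int_lb_indic _ _ _ _ _ `](a - delta)%R, (a + delta)%R[%classic).
  - exact: measurableT.
  - exact: measurable_itv.
  - apply: mulr_ge0; [lra | exact: (ltW eps_pos)].
  - by rewrite setIT.
  - by move=> y _; apply: integral_ge0 => z _; rewrite lee_fin indicE ler0n.
  move=> y _ /=; rewrite in_itv /= => /andP[hy1 hy2].
  have hg : `|quick_g u0 - quick_g u| < m * r / 8.
    apply: Hg; rewrite ltr_distlC; apply/andP; split; lra.
  move: hg; rewrite ltr_norml => /andP[hg1 hg2].
  have hua : `|u * (a - y)| < delta.
    rewrite normrM (ger0_norm (ltW u0')).
    apply: le_lt_trans (ler_piMl (normr_ge0 _) (ltW u1')) _.
    rewrite ltr_distlC; apply/andP; split; lra.
  move: hua; rewrite ltr_norml => /andP[hua1 hua2].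
  have hru : 0 <= r * ((1 - u) - m / 2) by apply: mulr_ge0; lra.
  apply: (@G_bound R mu f fd a r eta x eps u y (quick_g u)).
  - exact: ltW.
  - exact: Hf.
  - exact: eps_pos.
  - by rewrite u0' u1'.
  - lra.
  - lra.
have := le_trans lb ub; rewrite lee_fin => h.
have : 0 < K * eps by apply: mulr_gt0.
lra.
Qed.

End Main2.

Local Close Scope classical_set_scope.
Local Open Scope ring_scope.

Theorem corollary4p2 (R : realType) (mu : probability R R) (f : R -> R) :
  quicksort_law mu -> continuous f -> is_density mu f ->
  forall x : R, 0 < f x.
Proof.
move=> hq fc fd x.
have f0 := @f_ge0 R mu f fc fd.
have [a fa] : exists a, 0 < f a.
  apply: contrapT => nH.
  have H : forall b, ~ (0 < f b) by move=> b hb; apply: nH; exists b.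
  have fz y : f y = 0 by apply/eqP; rewrite eq_le f0 andbT leNgt; apply/negP; exact: H.
  have := probability_setT mu; rewrite fd //.
  rewrite integral0_eq; last by move=> y _; rewrite fz.
  by move=> /eqP; rewrite eq_sym onee_eq0.
have gl := @g_half_neg R.
have gh := @g_16_pos R.
have [del edel] : exists del, del = Num.min (- quick_g (1/2 : R)) (quick_g (1/16)) by eexists.
have del0 : 0 < del by rewrite edel lt_min oppr_gt0 gl gh.
have del1 : del <= - quick_g (1/2 : R) by rewrite edel ge_min lexx.
have del2 : del <= quick_g (1/16 : R) by rewrite edel ge_min lexx orbT.
have step b t : 0 < f b -> - del <= t <= del -> 0 < f (b + t).
  move=> fb /andP[t1 t2].
  have hc : {within `[(1/16 : R), (1/2 : R)], continuous (@quick_g R)}%classic.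
    apply: continuous_in_subspaceT => w; rewrite in_setE /= in_itv /= => /andP[w1 w2].
    apply: g_cont; apply/andP; split; lra.
  have hab : (1/16 : R) <= 1/2 by lra.
  have hv : Num.min (quick_g (1/16 : R)) (quick_g (1/2)) <= t <=
      Num.max (quick_g (1/16 : R)) (quick_g (1/2)).
    rewrite ge_min le_max; apply/andP; split; [apply/orP; right|apply/orP; left]; lra.
  have [c hc1 hc2] := @IVT R (@quick_g R) _ _ t hab hc hv.
  move: hc1; rewrite in_itv /= => /andP[c1 c2].
  rewrite -hc2; apply: (@shift_pos R mu f fc fd hq) => //; apply/andP; split; lra.
have ind (n : nat) y : `|y - a| <= n%:R * del -> 0 < f y.
  elim: n y => [|n IH] y hy.
    move: hy; rewrite mul0r ler_norml => /andP[h1 h2].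
    by have -> : y = a by lra.
  move: hy; rewrite -natr1 mulrDl mul1r ler_norml => /andP[h1 h2].
  have [hy|hy] := lerP (y - a) del.
    have [hy'|hy'] := lerP (a - y) del.
      have -> : y = a + (y - a) by ring.
      by apply: step => //; apply/andP; split; lra.
    have -> : y = (y + del) + (- del) by ring.
    apply: step; last by apply/andP; split; lra.
    by apply: IH; rewrite ler_norml; apply/andP; split; lra.
  have -> : y = (y - del) + del by ring.
  apply: step; last by apply/andP; split; lra.
  by apply: IH; rewrite ler_norml; apply/andP; split; lra.
have hx : 0 <= `|x - a| / del by apply: divr_ge0 => //; exact: ltW.
apply: (ind (Num.Def.archi_bound (`|x - a| / del))).
have := archi_boundP hx; rewrite ltr_pdivrMr // => h; exact: ltW.
Qed.
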